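(* Let $A\subset\mathbb R^\tau$ be a compact max-min convex set and let $\xi\colon J(A)\to\mathbb R^\tau$ be defined by $\xi(\mu)=(\mu(p_\alpha))_{\alpha<\tau}$, where $p_\alpha\colon A\to\mathbb R$ is the $\alpha$-th coordinate projection. Then $\xi(J(A))\subset A$.
   Context: A max-min measure on a compact Hausdorff space $X$ is a functional $\mu\colon C(X)\to\mathbb R$ (not assumed continuous) with $\mu(c_X)=c$ for constants, $\mu(\varphi\vee\psi)=\mu(\varphi)\vee\mu(\psi)$, $\mu(c\wedge\varphi)=c\wedge\mu(\varphi)$ for $c\in\mathbb R$; $J(X)$ is the set of max-min measures with the topology of pointwise convergence on $C(X)$. $\mathbb R^\tau$ carries the product topology. A subset $A\subset\mathbb R^\tau$ is max-min convex if $x\vee(\lambda\wedge y)\in A$ for all $x,y\in A$, $\lambda\in\mathbb R$ (coordinatewise operations). *)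

(* Defs.v *)
From Stdlib Require Import Reals List.
Open Scope R_scope.

Definition prod_open {tau : Type} (U : (tau -> R) -> Prop) : Prop :=
  forall x, U x -> exists (l : list tau) (eps : R), 0 < eps /\
    forall y, (forall i, In i l -> Rabs (y i - x i) < eps) -> U y.

Definition prod_compact {tau : Type} (A : (tau -> R) -> Prop) : Prop :=
  forall (I : Type) (U : I -> (tau -> R) -> Prop),
    (forall k, prod_open (U k)) ->
    (forall x, A x -> exists k, U k x) ->
    exists l : list I, forall x, A x -> exists k, In k l /\ U k x.

Definition maxmin_convex {tau : Type} (A : (tau -> R) -> Prop) : Prop :=
  forall x y, A x -> A y -> forall lam : R,
    A (fun i => Rmax (x i) (Rmin lam (y i))).

Definition Sub {tau : Type} (A : (tau -> R) -> Prop) : Type :=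
  { x : tau -> R | A x }.

Definition cont_on {tau : Type} {A : (tau -> R) -> Prop} (f : Sub A -> R) : Prop :=
  forall (x : Sub A) (eps : R), 0 < eps ->
    exists (l : list tau) (delta : R), 0 < delta /\
      forall y : Sub A,
        (forall i, In i l -> Rabs (proj1_sig y i - proj1_sig x i) < delta) ->
        Rabs (f y - f x) < eps.

(* A max-min measure on A: a functional on C(A).  We represent it as a map on
   all functions A -> R, imposing the axioms only on continuous functions
   (values on non-continuous functions are irrelevant). *)
Definition maxmin_measure {tau : Type} {A : (tau -> R) -> Prop}
    (mu : (Sub A -> R) -> R) : Prop :=
  (forall c : R, mu (fun _ => c) = c) /\
  (forall phi psi : Sub A -> R, cont_on phi -> cont_on psi ->
     mu (fun x => Rmax (phi x) (psi x)) = Rmax (mu phi) (mu psi)) /\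
  (forall (c : R) (phi : Sub A -> R), cont_on phi ->
     mu (fun x => Rmin c (phi x)) = Rmin c (mu phi)).

Definition proj_coord {tau : Type} {A : (tau -> R) -> Prop} (a : tau) : Sub A -> R :=
  fun x => proj1_sig x a.

Definition xi {tau : Type} {A : (tau -> R) -> Prop} (mu : (Sub A -> R) -> R) : tau -> R :=
  fun a => mu (proj_coord a).

(* Main.v *)
Require Import Defs.
From Stdlib Require Import Reals.
From Stdlib Require Import Lra List Classical FunctionalExtensionality.
Open Scope R_scope.

Lemma Rmax_lip (a b c d : R) :
  Rabs (Rmax a b - Rmax c d) <= Rmax (Rabs (a - c)) (Rabs (b - d)).
Proof.
  unfold Rmax at 1 2.
  destruct (Rle_dec a b); destruct (Rle_dec c d);
  unfold Rmax, Rabs; repeat destruct Rcase_abs; repeat destruct Rle_dec; lra.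
Qed.

Lemma cont_const {tau} {A : (tau -> R) -> Prop} (c : R) :
  @cont_on tau A (fun _ => c).
Proof.
  intros x e He. exists nil, 1. split; [lra|]. intros y _.
  rewrite Rminus_diag, Rabs_R0; lra.
Qed.

Lemma cont_proj {tau} {A : (tau -> R) -> Prop} (k : tau) :
  @cont_on tau A (proj_coord k).
Proof.
  intros x e He. exists (k :: nil), e. split; [lra|]. intros y Hy.
  apply Hy; simpl; auto.
Qed.

Lemma cont_lip {tau} {A : (tau -> R) -> Prop} (phi : Sub A -> R) (g : R -> R) (K : R) :
  0 < K -> (forall u v, Rabs (g u - g v) <= K * Rabs (u - v)) ->
  cont_on phi -> cont_on (fun b => g (phi b)).
Proof.
  intros HK Hg Hc x e He.
  destruct (Hc x (e / K)) as [l [d [Hd Hl]]].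
  { apply Rdiv_lt_0_compat; lra. }
  exists l, d. split; auto. intros y Hy.
  specialize (Hl y Hy). specialize (Hg (phi y) (phi x)).
  assert (K * Rabs (phi y - phi x) < K * (e / K)) by (apply Rmult_lt_compat_l; lra).
  assert (K * (e / K) = e) by (field; lra). lra.
Qed.

Lemma cont_max {tau} {A : (tau -> R) -> Prop} (phi psi : Sub A -> R) :
  cont_on phi -> cont_on psi -> cont_on (fun b => Rmax (phi b) (psi b)).
Proof.
  intros H1 H2 x e He.
  destruct (H1 x e He) as [l1 [d1 [Hd1 Hl1]]].
  destruct (H2 x e He) as [l2 [d2 [Hd2 Hl2]]].
  exists (l1 ++ l2), (Rmin d1 d2). split.
  { apply Rmin_glb_lt; auto. }
  intros y Hy.
  assert (A1 : Rabs (phi y - phi x) < e).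
  { apply Hl1. intros i Hi. eapply Rlt_le_trans. apply Hy. apply in_or_app; auto.
    apply Rmin_l. }
  assert (A2 : Rabs (psi y - psi x) < e).
  { apply Hl2. intros i Hi. eapply Rlt_le_trans. apply Hy. apply in_or_app; auto.
    apply Rmin_r. }
  eapply Rle_lt_trans. apply Rmax_lip.
  apply Rmax_lub_lt; auto.
Qed.

Lemma cont_min_c {tau} {A : (tau -> R) -> Prop} (c : R) (phi : Sub A -> R) :
  cont_on phi -> cont_on (fun b => Rmin c (phi b)).
Proof.
  intros H. apply (cont_lip phi (fun u => Rmin c u) 1); auto; try lra.
  intros u v. unfold Rmin, Rabs; repeat destruct Rcase_abs; repeat destruct Rle_dec; lra.
Qed.

Definition steep (s L u : R) : R := Rmax u (s + L * (u - s)).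

Lemma steep_lip (s L : R) : 1 <= L ->
  forall u v, Rabs (steep s L u - steep s L v) <= L * Rabs (u - v).
Proof.
  intros HL u v. unfold steep.
  eapply Rle_trans. apply Rmax_lip.
  replace (s + L * (u - s) - (s + L * (v - s))) with (L * (u - v)) by ring.
  rewrite Rabs_mult, (Rabs_pos_eq L) by lra.
  apply Rmax_lub; [|lra].
  assert (0 <= Rabs (u - v)) by apply Rabs_pos. nra.
Qed.

Lemma mu_mono {tau} {A : (tau -> R) -> Prop} (mu : (Sub A -> R) -> R) :
  maxmin_measure mu -> forall phi psi, cont_on phi -> cont_on psi ->
  (forall b, phi b <= psi b) -> mu phi <= mu psi.
Proof.
  intros [H0 [H1 H2]] phi psi Hp Hq Hle.
  assert (E : (fun b => Rmax (phi b) (psi b)) = psi).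
  { apply functional_extensionality. intros b. apply Rmax_right; auto. }
  pose proof (H1 phi psi Hp Hq) as H. rewrite E in H. rewrite H. apply Rmax_l.
Qed.

Lemma mu_steep {tau} {A : (tau -> R) -> Prop} (mu : (Sub A -> R) -> R) :
  maxmin_measure mu -> forall phi s L, cont_on phi -> mu phi < s -> 1 <= L ->
  mu (fun b => steep s L (phi b)) = mu phi.
Proof.
  intros Hmu phi s L Hc Hs HL. destruct Hmu as [H0 [H1 H2]].
  assert (Hh : cont_on (fun b => steep s L (phi b))).
  { apply (cont_lip phi (steep s L) L); [lra| apply steep_lip; auto| auto]. }
  assert (E : (fun b => Rmin s (steep s L (phi b))) = (fun b => Rmin s (phi b))).
  { apply functional_extensionality. intros b. unfold steep.
    unfold Rmin, Rmax; repeat destruct Rle_dec; nra. }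
  pose proof (H2 s _ Hh) as Ea. cbv beta in Ea. rewrite E, (H2 s _ Hc) in Ea.
  revert Ea. unfold Rmin; repeat destruct Rle_dec; lra.
Qed.

Lemma gen {tau} {A : (tau -> R) -> Prop} (mu : (Sub A -> R) -> R) :
  maxmin_measure mu -> forall (l : list tau) (eps : R) (psi : Sub A -> R) (lam : R),
  0 < eps -> cont_on psi -> lam < mu psi ->
  exists b : Sub A, lam < psi b /\
    forall k, In k l -> Rmin lam (proj1_sig b k) < mu (proj_coord k) + eps.
Proof.
  intros Hmu l eps psi lam He Hpsi Hlt.
  destruct (classic (exists b : Sub A, lam < psi b /\
    forall k, In k l -> Rmin lam (proj1_sig b k) < mu (proj_coord k) + eps)) as [H|H];
    [exact H| exfalso].
  set (t := mu psi) in *.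
  set (lam' := (lam + t) / 2).
  set (sk := fun k => mu (proj_coord k) + eps / 2).
  set (Lk := fun k => 1 + 2 * Rabs (lam' - sk k) / eps).
  set (hk := fun k (b : Sub A) => steep (sk k) (Lk k) (proj_coord k b)).
  set (pk := fun k => if Rle_dec (mu (proj_coord k) + eps) lam
                      then (fun b => Rmin lam' (hk k b)) else (fun _ : Sub A => lam)).
  assert (HL : forall k, 1 <= Lk k).
  { intros k. unfold Lk. assert (0 <= Rabs (lam' - sk k)) by apply Rabs_pos.
    assert (0 <= 2 * Rabs (lam' - sk k) / eps).
    { apply Rmult_le_pos; [lra| left; apply Rinv_0_lt_compat; lra]. } lra. }
  assert (Hhc : forall k, cont_on (hk k)).
  { intros k. apply (cont_lip (proj_coord k) (steep (sk k) (Lk k)) (Lk k)).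
    specialize (HL k); lra. apply steep_lip; auto. apply cont_proj. }
  assert (Hpc : forall k, cont_on (pk k)).
  { intros k. unfold pk. destruct Rle_dec. apply cont_min_c; auto. apply cont_const. }
  assert (Hpm : forall k, mu (pk k) <= lam).
  { intros k. unfold pk. destruct Rle_dec as [r|r].
    - destruct Hmu as [H0 [H1 H2]]. rewrite (H2 lam' _ (Hhc k)).
      unfold hk. rewrite (mu_steep mu (conj H0 (conj H1 H2))); auto.
      2: apply cont_proj. 2: unfold sk; lra.
      pose proof (Rmin_r lam' (mu (proj_coord k))). lra.
    - destruct Hmu as [H0 _]. rewrite H0. lra. }
  set (F := fold_right (fun k (acc : Sub A -> R) b => Rmax (pk k b) (acc b))
              (fun _ => lam) l).
  assert (HFc : cont_on F).
  { unfold F. clear - Hpc. induction l; simpl. apply cont_const.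
    apply cont_max; auto. }
  assert (HFm : mu F <= lam).
  { unfold F. clear - Hpc Hpm Hmu. induction l; simpl.
    - destruct Hmu as [H0 _]. rewrite H0. lra.
    - destruct Hmu as [H0 [H1 H2]].
      rewrite H1; auto.
      2: { clear - Hpc. induction l; simpl. apply cont_const. apply cont_max; auto. }
      apply Rmax_lub; auto. }
  assert (HFb : forall b, lam <= F b /\ forall k, In k l -> pk k b <= F b).
  { intros b. unfold F. clear. induction l; simpl.
    - split; [lra| tauto].
    - destruct IHl as [I1 I2]. split.
      + eapply Rle_trans; [exact I1| apply Rmax_r].
      + intros k [<-|Hk]. apply Rmax_l. eapply Rle_trans; [apply I2; auto| apply Rmax_r]. }
  assert (Hm : forall b, Rmin lam' (psi b) <= F b).
  { intros b. destruct (HFb b) as [F1 F2].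
    destruct (Rle_dec (psi b) lam) as [r|r].
    - pose proof (Rmin_r lam' (psi b)). lra.
    - assert (exists k, In k l /\ mu (proj_coord k) + eps <= Rmin lam (proj1_sig b k)) as [k [Hk Hk2]].
      { apply NNPP. intros Hn. apply H. exists b. split; [lra|].
        intros k Hk. apply Rnot_le_lt. intros Hc. apply Hn. exists k; auto. }
      eapply Rle_trans; [|apply (F2 k Hk)].
      unfold pk. destruct Rle_dec as [r2|r2].
      2: { exfalso. apply r2. pose proof (Rmin_l lam (proj1_sig b k)). lra. }
      pose proof (Rmin_r lam (proj1_sig b k)) as Hb.
      assert (lam' <= hk k b).
      { unfold hk, steep, proj_coord. eapply Rle_trans; [|apply Rmax_r].
        assert (E : Lk k * (eps / 2) = eps / 2 + Rabs (lam' - sk k)).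
        { unfold Lk. field. lra. }
        assert (Lk k * (eps / 2) <= Lk k * (proj1_sig b k - sk k)).
        { apply Rmult_le_compat_l. specialize (HL k); lra. unfold sk; lra. }
        pose proof (Rle_abs (lam' - sk k)). lra. }
      unfold Rmin at 2. destruct Rle_dec; pose proof (Rmin_l lam' (psi b)); lra. }
  assert (Hmc : cont_on (fun b => Rmin lam' (psi b))) by (apply cont_min_c; auto).
  pose proof (mu_mono mu Hmu _ _ Hmc HFc Hm) as Hmono.
  destruct Hmu as [H0 [H1 H2]]. rewrite H2 in Hmono; auto.
  unfold Rmin in Hmono. destruct Rle_dec; unfold lam' in *.
  all: clearbody F; clear -Hlt HFm Hmono; unfold t in *; lra.
Qed.

Lemma approx {tau} {A : (tau -> R) -> Prop} (mu : (Sub A -> R) -> R) :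
  maxmin_measure mu -> maxmin_convex A -> forall (l : list tau) (eps : R), 0 < eps ->
  exists a, A a /\ forall k, In k l -> Rabs (a k - xi mu k) < eps.
Proof.
  intros Hmu Hconv l eps He.
  set (lam := fold_right (fun k acc => Rmax (mu (proj_coord k) + eps) acc) 0 l).
  assert (Hlam : forall k, In k l -> mu (proj_coord k) + eps <= lam).
  { unfold lam. clear. induction l; simpl; [tauto|].
    intros k [<-|Hk]. apply Rmax_l. eapply Rle_trans; [apply IHl; auto| apply Rmax_r]. }
  destruct (gen mu Hmu l eps (fun _ => lam + 1) lam He (cont_const _)) as [b0 [_ Hb0]].
  { destruct Hmu as [H0 _]. rewrite H0. lra. }
  assert (Main : forall l', incl l' l -> exists a, A a /\
     (forall k, In k l -> a k < mu (proj_coord k) + eps) /\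
     (forall i, In i l' -> mu (proj_coord i) - eps < a i)).
  { induction l' as [|i l' IH]; intros Hincl.
    - exists (proj1_sig b0). split; [apply (proj2_sig b0)|]. split; [|simpl; tauto].
      intros k Hk. specialize (Hb0 k Hk). specialize (Hlam k Hk).
      revert Hb0. unfold Rmin. destruct Rle_dec; lra.
    - destruct IH as [a [Ha [Ha1 Ha2]]].
      { intros z Hz. apply Hincl. simpl; auto. }
      destruct (gen mu Hmu l eps (proj_coord i) (mu (proj_coord i) - eps / 2) He
                  (cont_proj i)) as [b [Hb1 Hb2]]; [lra|].
      exists (fun j => Rmax (a j) (Rmin (mu (proj_coord i) - eps / 2) (proj1_sig b j))).
      split. apply Hconv; auto. apply (proj2_sig b).
      split.
      + intros k Hk. apply Rmax_lub_lt; auto.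
      + intros j [<-|Hj].
        * eapply Rlt_le_trans; [|apply Rmax_r]. unfold proj_coord in Hb1 |- *.
          unfold Rmin. destruct Rle_dec; lra.
        * eapply Rlt_le_trans; [apply Ha2; auto| apply Rmax_l]. }
  destruct (Main l (incl_refl l)) as [a [Ha [Ha1 Ha2]]].
  exists a. split; auto. intros k Hk. unfold xi.
  specialize (Ha1 k Hk). specialize (Ha2 k Hk).
  apply Rabs_def1; lra.
Qed.

Theorem mainTheorem19 (tau : Type) (A : (tau -> R) -> Prop) :
  prod_compact A -> maxmin_convex A ->
  forall mu : (Sub A -> R) -> R, maxmin_measure mu -> A (xi mu).
Proof.
  intros Hc Hconv mu Hmu.
  destruct (classic (A (xi mu))) as [H|Hn]; [exact H| exfalso].
  set (x := xi mu) in *.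
  set (I := {p : tau * R | snd p <> x (fst p)}).
  set (d := fun p : tau * R => Rabs (snd p - x (fst p)) / 2).
  set (U := fun (p : I) (y : tau -> R) =>
              Rabs (y (fst (proj1_sig p)) - snd (proj1_sig p)) < d (proj1_sig p)).
  destruct (Hc I U) as [L HL].
  - intros p y Hy. exists (fst (proj1_sig p) :: nil).
    exists (d (proj1_sig p) - Rabs (y (fst (proj1_sig p)) - snd (proj1_sig p))).
    split; [unfold U in Hy; lra|].
    intros z Hz. specialize (Hz _ (or_introl eq_refl)). unfold U.
    pose proof (Rabs_triang (z (fst (proj1_sig p)) - y (fst (proj1_sig p)))
                             (y (fst (proj1_sig p)) - snd (proj1_sig p))).
    replace (z (fst (proj1_sig p)) - y (fst (proj1_sig p)) +
             (y (fst (proj1_sig p)) - snd (proj1_sig p)))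
      with (z (fst (proj1_sig p)) - snd (proj1_sig p)) in H by ring.
    lra.
  - intros a Ha.
    assert (exists i, a i <> x i) as [i Hi].
    { apply NNPP. intros Hne. apply Hn.
      replace x with a; auto. apply functional_extensionality. intros i.
      apply NNPP. intros Hi. apply Hne. exists i; auto. }
    exists (exist (fun p : tau * R => snd p <> x (fst p)) (i, a i) Hi). unfold U, d; simpl.
    rewrite Rminus_diag, Rabs_R0.
    assert (0 < Rabs (a i - x i)) by (apply Rabs_pos_lt; lra). lra.
  - set (e := fold_right (fun (p : I) acc => Rmin (d (proj1_sig p)) acc) 1 L).
    assert (He : 0 < e).
    { unfold e. clear HL. induction L; simpl; [lra|].
      apply Rmin_glb_lt; auto. unfold d.
      destruct a as [[i r] Hr]; simpl in *.
      assert (0 < Rabs (r - x i)) by (apply Rabs_pos_lt; lra). lra. }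
    assert (Hed : forall p, In p L -> e <= d (proj1_sig p)).
    { unfold e. clear. induction L; simpl; [tauto|].
      intros p [<-|Hp]. apply Rmin_l. eapply Rle_trans; [apply Rmin_r| apply IHL; auto]. }
    destruct (approx mu Hmu Hconv (map (fun p : I => fst (proj1_sig p)) L) e He)
      as [a [Ha Hae]].
    destruct (HL a Ha) as [p [Hp Hu]].
    specialize (Hed p Hp).
    assert (Hai : Rabs (a (fst (proj1_sig p)) - x (fst (proj1_sig p))) < e).
    { apply Hae. apply (in_map (fun p : I => fst (proj1_sig p))). auto. }
    unfold U, d in *. destruct p as [[i r] Hr]; simpl in *.
    pose proof (Rabs_triang (r - a i) (a i - x i)) as T.
    replace (r - a i + (a i - x i)) with (r - x i) in T by ring.
    rewrite Rabs_minus_sym in Hu. lra.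
Qed.
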